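(* Let $G$ be a connected graph and let $\mathcal T=(T,\mathcal X)$ be a tree-cut decomposition of $G$ of finite adhesion whose parts are exactly the $\omega$-edge blocks of $G$ and such that for every edge $t_1t_2\in E(T)$ there is an edge of $G$ between $X_{t_1}$ and $X_{t_2}$. Then the map $\varphi_{\mathcal T}:\Omega_E(G)\to\|T\|$ is a topological embedding. Moreover: (1) $\varphi_{\mathcal T}$ restricts to a bijection between the edge-ends of $G$ that are not edge-dominated by any vertex and the ends of $T$; (2) $\varphi_{\mathcal T}$ restricts to an injection from the edge-dominated edge-ends of $G$ into $V(T)$, and for each such edge-end $\omega$ the vertices in $X_{\varphi_{\mathcal T}(\omega)}$ are precisely the vertices of $G$ that edge-dominate $\omega$.
   Context: Rays are one-way infinite paths; two rays are edge-equivalent if no finite edge set separates them; the classes are edge-ends, forming $\Omega_E(G)$. For finite $F\subseteq E(G)$ and an edge-end $\omega$, $C(F,\omega)$ is the unique component of $G-F$ containing a tail of every ray in $\omega$. An edge-end $\omega$ is edge-dominated by a vertex $v$ if $v\in C(F,\omega)$ for every finite $F\subseteq E(G)$. A region of a graph $H$ is a connected induced subgraph $C$ with finite boundary $\partial C$; $\Omega_E(C)$ is the set of edge-ends having a ray in $C$, $\|C\|=V(C)\cup\Omega_E(C)$. The sets $\Omega_E(C)$ (resp. $\|C\|$) for regions $C$ form a basis of $\Omega_E(H)$ (resp. $\|H\|=V(H)\cup\Omega_E(H)$); for a tree $T$, $\Omega_E(T)$ is its usual end space $\Omega(T)$. The $\omega$-edge blocks of $G$ are the classes of the relation ''$x,y$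 cannot be separated by finitely many edges''. A tree-cut decomposition $(T,\mathcal X)$ is a tree $T$ with a partition $\mathcal X=\{X_t:t\in V(T)\}$ of $V(G)$ into nonempty parts; the adhesion set of $e=t_1t_2\in E(T)$ is $X_e=E_G(\bigcup_{t\in T_1}X_t,\bigcup_{t\in T_2}X_t)$ where $T_1\ni t_1,T_2\ni t_2$ are the components of $T-e$; finite adhesion means all $X_e$ finite. Definition of $\varphi_{\mathcal T}$: for an edge-end $\omega$ and $e\in E(T)$, since $X_e$ is finite, every ray of $\omega$ has a tail in $G[\bigcup_{t\in T_i}X_t]$ for the same unique $i\in\{1,2\}$; orient $e$ towards $T_i$. Then either all edges of $T$ are oriented towards a unique node $t$, or towards a unique end of $T$; $\varphi_{\mathcal T}(\omega)$ is this node or end. *)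

(* Defs.v *)
From Stdlib Require Import List Relations Arith.
Import ListNotations.
Set Implicit Arguments.

Section Graphs.
Context {V : Type}.

Definition is_graph (A : V -> V -> Prop) : Prop :=
  (forall u v, A u v -> A v u) /\ (forall u, ~ A u u).

(* Finite edge sets are given by finite lists of (unordered) pairs. *)
Definition inF (F : list (V * V)) (u v : V) : Prop := In (u, v) F \/ In (v, u) F.

Definition del (A : V -> V -> Prop) (F : list (V * V)) (u v : V) : Prop :=
  A u v /\ ~ inF F u v.

Definition conn (A : V -> V -> Prop) : V -> V -> Prop := clos_refl_trans V A.

Definition connected_graph (A : V -> V -> Prop) : Prop := forall x y, conn A x y.

(* A tree: connected graph in which every edge is a bridge (i.e. acyclic). *)
Definition is_tree (A : V -> V -> Prop) : Prop :=
  is_graph A /\ connected_graph A /\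
  (forall t1 t2, A t1 t2 -> ~ conn (del A [(t1, t2)]) t1 t2).

Definition is_ray (A : V -> V -> Prop) (r : nat -> V) : Prop :=
  (forall i j, r i = r j -> i = j) /\ (forall n, A (r n) (r (S n))).

Definition tail_in (r : nat -> V) (S : V -> Prop) : Prop :=
  exists n0, forall n, n0 <= n -> S (r n).

Definition edge_equiv (A : V -> V -> Prop) (r s : nat -> V) : Prop :=
  forall F : list (V * V), exists n m, forall i j, n <= i -> m <= j ->
    conn (del A F) (r i) (s j).

Definition edge_dominates (A : V -> V -> Prop) (v : V) (r : nat -> V) : Prop :=
  forall F : list (V * V), exists n, forall i, n <= i -> conn (del A F) v (r i).

Definition edge_dominated (A : V -> V -> Prop) (r : nat -> V) : Prop :=
  exists v, edge_dominates A v r.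

Definition insep (A : V -> V -> Prop) (x y : V) : Prop :=
  forall F : list (V * V), conn (del A F) x y.

Definition region (A : V -> V -> Prop) (C : V -> Prop) : Prop :=
  (exists x, C x) /\
  (forall x y, C x -> C y -> conn (fun u v => A u v /\ C u /\ C v) x y) /\
  (exists L : list (V * V), forall u v, A u v -> C u -> ~ C v -> inF L u v).

Definition in_OmegaE (A : V -> V -> Prop) (C : V -> Prop) (r : nat -> V) : Prop :=
  exists s, is_ray A s /\ edge_equiv A r s /\ forall n, C (s n).

End Graphs.

(* Points of ||T|| = V(T) u Omega_E(T): a node, or an end represented by a ray. *)
Inductive tpoint (N : Type) : Type :=
| TNode : N -> tpoint N
| TEnd : (nat -> N) -> tpoint N.
Arguments TNode {N} _.
Arguments TEnd {N} _.

Definition in_norm {N} (TA : N -> N -> Prop) (D : N -> Prop) (p : tpoint N) : Prop :=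
  match p with
  | TNode t => D t
  | TEnd s => in_OmegaE TA D s
  end.

(* equality of points of ||T|| (ends are classes of rays) *)
Definition peq {N} (TA : N -> N -> Prop) (p q : tpoint N) : Prop :=
  match p, q with
  | TNode a, TNode b => a = b
  | TEnd s, TEnd s' => edge_equiv TA s s'
  | _, _ => False
  end.

Definition side {N} (TA : N -> N -> Prop) (t1 t2 u : N) : N -> Prop :=
  conn (del TA [(t1, t2)]) u.

(* Tree-cut decomposition given by the part map part : V(G) -> V(T)
   (X_t = part^{-1}(t)), with all parts nonempty. *)
Definition tree_cut_decomposition {V N} (TA : N -> N -> Prop) (part : V -> N) : Prop :=
  is_tree TA /\ forall t, exists v, part v = t.

Definition finite_adhesion {V N} (GA : V -> V -> Prop) (TA : N -> N -> Prop)
  (part : V -> N) : Prop :=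
  forall t1 t2, TA t1 t2 ->
    exists L : list (V * V), forall u v, GA u v ->
      side TA t1 t2 t1 (part u) -> side TA t1 t2 t2 (part v) -> inF L u v.

(* phi_T(omega) = p, omega represented by a ray r of G:
   every edge t1t2 of T is oriented towards the side containing p. *)
Definition phi {V N} (GA : V -> V -> Prop) (TA : N -> N -> Prop) (part : V -> N)
  (r : nat -> V) (p : tpoint N) : Prop :=
  match p with
  | TNode t => forall t1 t2, TA t1 t2 ->
      tail_in r (fun v => side TA t1 t2 t (part v))
  | TEnd s => is_ray TA s /\
      forall t1 t2, TA t1 t2 -> forall u, tail_in s (side TA t1 t2 u) ->
        tail_in r (fun v => side TA t1 t2 u (part v))
  end.

(* phi is a well-defined map Omega_E(G) -> ||T|| which is a topological embedding,
   where Omega_E(G) and ||T|| carry the topologies generated by the bases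
   { Omega_E(C) : C region of G } and { ||D|| : D region of T }. *)
Definition topological_embedding {V N} (GA : V -> V -> Prop) (TA : N -> N -> Prop)
  (f : (nat -> V) -> tpoint N -> Prop) : Prop :=
  (forall r, is_ray GA r -> exists p, f r p) /\
  (forall r r' p p', is_ray GA r -> is_ray GA r' -> edge_equiv GA r r' ->
     f r p -> f r' p' -> peq TA p p') /\
  (forall r r' p p', is_ray GA r -> is_ray GA r' -> f r p -> f r' p' ->
     peq TA p p' -> edge_equiv GA r r') /\
  (forall r p, is_ray GA r -> f r p -> forall D, region TA D -> in_norm TA D p ->
     exists C, region GA C /\ in_OmegaE GA C r /\
       forall r' p', is_ray GA r' -> in_OmegaE GA C r' -> f r' p' -> in_norm TA D p') /\
  (forall r p, is_ray GA r -> f r p -> forall C, region GA C -> in_OmegaE GA C r ->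
     exists D, region TA D /\ in_norm TA D p /\
       forall r' p', is_ray GA r' -> f r' p' -> in_norm TA D p' -> in_OmegaE GA C r').

(* Main.v *)
Require Import Defs.
From Stdlib Require Import List Relations Arith Lia Classical ClassicalEpsilon.
Import ListNotations.

Section Gen.
Context {X : Type}.
Implicit Types (R S : X -> X -> Prop).

Lemma conn_refl R x : conn R x x. Proof. apply rt_refl. Qed.
Lemma conn_step R x y : R x y -> conn R x y. Proof. apply rt_step. Qed.
Lemma conn_trans R x y z : conn R x y -> conn R y z -> conn R x z.
Proof. apply rt_trans. Qed.
Lemma conn_mono R S : (forall x y, R x y -> S x y) -> forall x y, conn R x y -> conn S x y.
Proof. intros H x y Hc. induction Hc; [apply rt_step; auto | apply rt_refl | eapply rt_trans; eauto]. Qed.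
Lemma conn_sym R : (forall x y, R x y -> R y x) -> forall x y, conn R x y -> conn R y x.
Proof. intros H x y Hc; induction Hc; [apply rt_step; auto| apply rt_refl| eapply rt_trans; eauto]. Qed.

Lemma inF_sym (F : list (X*X)) u v : inF F u v -> inF F v u.
Proof. unfold inF; tauto. Qed.
Lemma inF_app_l (F F' : list (X*X)) u v : inF F u v -> inF (F ++ F') u v.
Proof. unfold inF; rewrite !in_app_iff; tauto. Qed.
Lemma inF_app_r (F F' : list (X*X)) u v : inF F' u v -> inF (F ++ F') u v.
Proof. unfold inF; rewrite !in_app_iff; tauto. Qed.
Lemma inF_app (F F' : list (X*X)) u v : inF (F ++ F') u v -> inF F u v \/ inF F' u v.
Proof. unfold inF; rewrite !in_app_iff; tauto. Qed.
Lemma inF_single a b (u v : X) : inF [(a,b)] u v -> (u = a /\ v = b) \/ (u = b /\ v = a).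
Proof. unfold inF; simpl; intros [[H|[]]|[H|[]]]; inversion H; subst; auto. Qed.
Lemma inF_cons a b (F : list (X*X)) u v : inF ((a,b)::F) u v -> (u = a /\ v = b) \/ (u = b /\ v = a) \/ inF F u v.
Proof. unfold inF; simpl; intros [[H|H]|[H|H]]; try (inversion H; subst; tauto); tauto. Qed.
Lemma inF_in a b (F : list (X*X)) : In (a,b) F -> inF F a b.
Proof. unfold inF; tauto. Qed.

Lemma del_sym A F : (forall u v : X, A u v -> A v u) -> forall u v, del A F u v -> del A F v u.
Proof. unfold del; intros H u v [H1 H2]; split; auto. intro; apply H2, inF_sym; auto. Qed.
Lemma del_incl A (F F' : list (X*X)) : (forall u v, inF F u v -> inF F' u v) -> forall u v, del A F' u v -> del A F u v.
Proof. unfold del; intros H u v [H1 H2]; split; auto. Qed.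
Lemma del_sub A F (u v : X) : del A F u v -> A u v.
Proof. intros [H _]; auto. Qed.
Lemma conn_del_incl A (F F' : list (X*X)) x y : (forall u v, inF F u v -> inF F' u v) -> conn (del A F') x y -> conn (del A F) x y.
Proof. intros H; apply conn_mono, del_incl; auto. Qed.

Inductive walkn R : nat -> X -> X -> Prop :=
| wn0 x : walkn R 0 x x
| wnS n x y z : R x y -> walkn R n y z -> walkn R (S n) x z.

Lemma walkn_conn R n x y : walkn R n x y -> conn R x y.
Proof. induction 1. apply conn_refl. eapply conn_trans; [apply conn_step|]; eauto. Qed.
Lemma conn_walkn R x y : conn R x y -> exists n, walkn R n x y.
Proof. intro H; apply clos_rt_rt1n in H; induction H. exists 0; constructor.
  destruct IHclos_refl_trans_1n as [n Hn]; exists (S n); econstructor; eauto. Qed.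

Lemma comp_induced R c x : conn R c x -> conn (fun p q => R p q /\ conn R c p /\ conn R c q) c x.
Proof.
  intro H. pose proof (clos_rt_rtn1 _ _ _ _ H) as H1. induction H1. apply conn_refl.
  assert (conn R c y) by (apply clos_rtn1_rt; auto).
  eapply conn_trans; [apply IHclos_refl_trans_n1; auto|]. apply conn_step.
  assert (conn R c z) by (eapply conn_trans; eauto; apply conn_step; auto). tauto.
Qed.

Lemma conn_spath R x y : conn R x y -> exists (len : nat) (f : nat -> X), f 0 = x /\ f len = y /\
  (forall i, i < len -> R (f i) (f (S i))) /\ (forall i j, i <= len -> j <= len -> f i = f j -> i = j).
Proof.
  intro H. pose proof (clos_rt_rtn1 _ _ _ _ H) as H1. clear H. induction H1.
  - exists 0, (fun _ => x); repeat split; intros; lia.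
  - destruct IHclos_refl_trans_n1 as (len & f & H0 & Hl & Hs & Hi).
    destruct (classic (exists j, j <= len /\ f j = z)) as [(j & Hj & Hfj)|Hn].
    + exists j, f; repeat split; auto. intros; apply Hs; lia. intros; apply Hi; auto; lia.
    + exists (S len), (fun i => if i <=? len then f i else z). repeat split.
      * simpl. auto.
      * assert (S len <=? len = false) as E by (apply Nat.leb_gt; lia). rewrite E; auto.
      * intros i Hil. assert (i <=? len = true) as E by (apply Nat.leb_le; lia). rewrite E.
        destruct (S i <=? len) eqn:E2. apply Hs. apply Nat.leb_le in E2; lia.
        apply Nat.leb_gt in E2. replace i with len by lia; rewrite Hl; auto.
      * intros i j Hi1 Hj1. destruct (i <=? len) eqn:E1; destruct (j <=? len) eqn:E2;
        try apply Nat.leb_le in E1; try apply Nat.leb_le in E2;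
        try apply Nat.leb_gt in E1; try apply Nat.leb_gt in E2.
        apply Hi; auto. intro; exfalso; apply Hn; exists i; auto.
        intro; exfalso; apply Hn; exists j; auto. intros; lia.
Qed.

Lemma ray_avoid (r : nat -> X) : (forall i j, r i = r j -> i = j) -> forall a, exists Na, forall i, Na <= i -> r i <> a.
Proof.
  intros Hi a. destruct (classic (exists i, r i = a)) as [[i Hia]|Hn].
  exists (S i); intros j Hj E. rewrite <- Hia in E. apply Hi in E; lia.
  exists 0; intros j _ E; apply Hn; eauto.
Qed.

Lemma ray_tail_noF (r : nat -> X) : (forall i j, r i = r j -> i = j) -> forall F : list (X*X), exists N, forall i, N <= i -> ~ inF F (r i) (r (S i)).
Proof.
  intros Hi F. induction F as [|[a b] F IH].
  - exists 0; intros i _ [H|H]; inversion H.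
  - destruct IH as [N' HN']. destruct (ray_avoid r Hi a) as [Na Ha]. destruct (ray_avoid r Hi b) as [Nb Hb].
    exists (N' + Na + Nb). intros i Hil Hin. apply inF_cons in Hin as [[E1 E2]|[[E1 E2]|Hin]].
    apply (Ha i); auto; lia. apply (Hb i); auto; lia. apply (HN' i); auto; lia.
Qed.

Lemma ray_tail_conn (A : X -> X -> Prop) (r : nat -> X) : (forall u v : X, A u v -> A v u) -> is_ray A r -> forall F, exists N, forall i j, N <= i -> N <= j -> conn (del A F) (r i) (r j).
Proof.
  intros Hsym [Hi Hs] F. destruct (ray_tail_noF r Hi F) as [N HN]. exists N.
  assert (Hf : forall i k, N <= i -> conn (del A F) (r i) (r (k + i))).
  { intros i k Hil. induction k. apply conn_refl. eapply conn_trans; [apply IHk|]. apply conn_step.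
    split. replace (S k + i) with (S (k + i)) by lia. apply Hs. replace (S k + i) with (S (k + i)) by lia. apply HN; lia. }
  intros i j Hil Hjl. destruct (le_lt_dec i j).
  replace j with ((j - i) + i) by lia. apply Hf; auto.
  apply conn_sym. apply del_sym; auto. replace i with ((i - j) + j) by lia. apply Hf; auto.
Qed.

Lemma edge_equiv_refl (A : X -> X -> Prop) (r : nat -> X) : (forall u v : X, A u v -> A v u) -> is_ray A r -> edge_equiv A r r.
Proof. intros Hs Hr F. destruct (ray_tail_conn A r Hs Hr F) as [N HN]. exists N, N. auto. Qed.

Lemma edge_equiv_sym (A : X -> X -> Prop) (r s : nat -> X) : (forall u v : X, A u v -> A v u) -> edge_equiv A r s -> edge_equiv A s r.
Proof. intros Hs H F. destruct (H F) as (n & m & Hnm). exists m, n. intros i j Hi Hj.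
  apply conn_sym. apply del_sym; auto. auto. Qed.

Lemma shift_ray (A : X -> X -> Prop) (r : nat -> X) M : is_ray A r -> is_ray A (fun n => r (M + n)).
Proof. intros [Hi Hs]; split. intros i j E; apply Hi in E; lia. intro n. replace (M + S n) with (S (M + n)) by lia. apply Hs. Qed.

Lemma shift_equiv (A : X -> X -> Prop) (r : nat -> X) M : (forall u v : X, A u v -> A v u) -> is_ray A r -> edge_equiv A r (fun n => r (M + n)).
Proof. intros Hs Hr F. destruct (ray_tail_conn A r Hs Hr F) as [N HN]. exists N, N. intros i j Hi Hj. apply HN; lia. Qed.

Lemma tail_and (r : nat -> X) P Q : tail_in r P -> tail_in r Q -> tail_in r (fun v => P v /\ Q v).
Proof. intros [n1 H1] [n2 H2]; exists (n1 + n2); intros; split; [apply H1|apply H2]; lia. Qed.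
Lemma tail_mono (r : nat -> X) (P Q : X -> Prop) : (forall v, P v -> Q v) -> tail_in r P -> tail_in r Q.
Proof. intros H [n Hn]; exists n; auto. Qed.

End Gen.

Lemma thresh {Y : Type} (cond : Y -> Y -> Prop) (P : Y -> Y -> nat -> Prop) (L : list (Y*Y)) :
  (forall a b, cond a b -> exists n, forall i, n <= i -> P a b i) ->
  exists M, forall a b, cond a b -> inF L a b -> forall i, M <= i -> P a b i.
Proof.
  intro H. induction L as [|[x y] L IH].
  - exists 0; intros a b _ [Hf|Hf]; inversion Hf.
  - destruct IH as [M' HM'].
    assert (exists Mx, cond x y -> forall i, Mx <= i -> P x y i) as [Mx HMx].
    { destruct (classic (cond x y)) as [Hc|Hc]. destruct (H _ _ Hc) as [n Hn]; exists n; auto. exists 0; tauto. }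
    assert (exists My, cond y x -> forall i, My <= i -> P y x i) as [My HMy].
    { destruct (classic (cond y x)) as [Hc|Hc]. destruct (H _ _ Hc) as [n Hn]; exists n; auto. exists 0; tauto. }
    exists (M' + Mx + My). intros a b Hc Hin i Hi. apply inF_cons in Hin as [[E1 E2]|[[E1 E2]|Hin]]; subst.
    apply HMx; auto; lia. apply HMy; auto; lia. apply HM'; auto; lia.
Qed.

Section Tree.
Context {N : Type} (TA : N -> N -> Prop) (HT : is_tree TA).

Lemma TA_sym a b : TA a b -> TA b a.
Proof. destruct HT as [[H _] _]; auto. Qed.
Lemma TA_irr a : ~ TA a a.
Proof. destruct HT as [[_ H] _]; auto. Qed.
Lemma tconn x y : conn TA x y.
Proof. destruct HT as [_ [H _]]; auto. Qed.
Lemma bridge a b : TA a b -> ~ side TA a b a b.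
Proof. destruct HT as [_ [_ H]]; exact (H a b). Qed.

Lemma side_refl a b u : side TA a b u u.
Proof. apply conn_refl. Qed.
Lemma del_single_swap a b u v : del TA [(a,b)] u v -> del TA [(b,a)] u v.
Proof. apply del_incl. intros x y H; apply inF_single in H as [[-> ->]|[-> ->]]; unfold inF; simpl; tauto. Qed.
Lemma side_swap a b u x : side TA a b u x -> side TA b a u x.
Proof. apply conn_mono, del_single_swap. Qed.
Lemma side_symm a b u x : side TA a b u x -> side TA a b x u.
Proof. apply conn_sym, del_sym, TA_sym. Qed.
Lemma side_trans a b u x y : side TA a b u x -> side TA a b x y -> side TA a b u y.
Proof. apply conn_trans. Qed.
Lemma side_step a b x y : TA x y -> ~ inF [(a,b)] x y -> side TA a b x y.
Proof. intros; apply conn_step; split; auto. Qed.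

Lemma side_dich a b x : TA a b -> side TA a b a x \/ side TA a b b x.
Proof.
  intro Hab. pose proof (clos_rt_rtn1 _ _ _ _ (tconn a x)) as H. induction H.
  left; apply side_refl.
  destruct (classic (inF [(a,b)] y z)) as [Hi|Hi].
  - apply inF_single in Hi as [[-> ->]|[-> ->]]. right; apply side_refl. left; apply side_refl.
  - destruct IHclos_refl_trans_n1 as [H1|H1]; [left|right]; eapply side_trans; eauto; apply side_step; auto.
Qed.

Lemma side_excl a b x : TA a b -> side TA a b a x -> side TA a b b x -> False.
Proof. intros Hab H1 H2. apply (bridge a b Hab). eapply side_trans; eauto. apply side_symm; auto. Qed.

Lemma side_same a b u x : TA a b -> side TA a b a u -> side TA a b u x -> side TA a b a x.
Proof. intros; eapply side_trans; eauto. Qed.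

Lemma cross_edge a b x y : TA a b -> side TA a b a x -> side TA a b b y -> TA x y -> x = a /\ y = b.
Proof.
  intros Hab Hx Hy Hxy. destruct (classic (inF [(a,b)] x y)) as [Hi|Hi].
  - apply inF_single in Hi as [[-> ->]|[-> ->]]; auto. exfalso; apply (bridge a b Hab); auto.
  - exfalso. apply (side_excl a b y Hab); auto. eapply side_trans; eauto. apply side_step; auto.
Qed.

Lemma cross_conn (R : N -> N -> Prop) a b x y : (forall u v, R u v -> TA u v) -> TA a b -> conn R x y ->
  side TA a b a x -> side TA a b b y -> conn R x a /\ conn R b y.
Proof.
  intros HR Hab H. apply clos_rt_rt1n in H. induction H; intros Hx Hy.
  - exfalso; apply (side_excl a b x Hab); auto.
  - destruct (side_dich a b y Hab) as [Hy'|Hy'].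
    + destruct IHclos_refl_trans_1n as [H1 H2]; auto. split; auto. eapply conn_trans; eauto. apply conn_step; auto.
    + destruct (cross_edge a b x y Hab Hx Hy' (HR _ _ H)) as [-> ->]. split. apply conn_refl. apply clos_rt1n_rt; auto.
Qed.

Lemma cross_walk a b m x y : TA a b -> walkn TA m x y -> side TA a b a x -> side TA a b b y ->
  exists m1 m2, m1 < m /\ m2 < m /\ walkn TA m1 x a /\ walkn TA m2 b y.
Proof.
  intros Hab H. induction H; intros Hx Hy.
  - exfalso; apply (side_excl a b x Hab); auto.
  - destruct (side_dich a b y Hab) as [Hy'|Hy'].
    + destruct IHwalkn as (m1 & m2 & H1 & H2 & H3 & H4); auto. exists (S m1), m2. repeat split; try lia; auto. econstructor; eauto.
    + destruct (cross_edge a b x y Hab Hx Hy' H) as [-> ->]. exists 0, n. repeat split; try lia; auto. constructor.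
Qed.

Lemma sep_edge t t' : t <> t' -> exists a b, TA a b /\ side TA a b a t /\ side TA a b b t'.
Proof.
  intro Hne. destruct (conn_walkn _ _ _ (tconn t t')) as [m Hm]. revert t Hne Hm.
  induction m as [m IH] using lt_wf_ind. intros t Hne Hm. inversion Hm; subst. tauto.
  destruct (side_dich t y t' H) as [Hs|Hs].
  - destruct (cross_walk y t n y t' (TA_sym _ _ H) H0) as (m1 & m2 & _ & Hm2 & _ & Hw).
    apply side_refl. apply side_swap; auto.
    apply (IH m2); auto; lia.
  - exists t, y. repeat split; auto. apply side_refl.
Qed.

Lemma sepF F x y : ~ conn (del TA F) x y -> exists a b, TA a b /\ inF F a b /\ side TA a b a x /\ side TA a b b y.
Proof.
  intro Hne. destruct (conn_walkn _ _ _ (tconn x y)) as [m Hm]. revert x Hne Hm.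
  induction m as [m IH] using lt_wf_ind. intros x Hne Hm. inversion Hm; subst. exfalso; apply Hne, conn_refl.
  destruct (classic (inF F x y0)) as [HF|HF].
  - destruct (side_dich x y0 y H) as [Hs|Hs].
    + destruct (cross_walk y0 x n y0 y (TA_sym _ _ H) H0) as (m1 & m2 & _ & Hm2 & _ & Hw).
      apply side_refl. apply side_swap; auto.
      apply (IH m2); auto; lia.
    + exists x, y0. repeat split; auto. apply side_refl.
  - assert (~ conn (del TA F) y0 y) as Hne2.
    { intro C; apply Hne. eapply conn_trans; eauto. apply conn_step; split; auto. }
    destruct (IH n ltac:(lia) y0 Hne2 H0) as (a & b & Hab & Hin & Ha & Hb). exists a, b; repeat split; auto.
    eapply side_trans; eauto. apply side_symm. apply side_step; auto.
    intro Hi. apply inF_single in Hi as [[-> ->]|[-> ->]]; apply HF; auto. apply inF_sym; auto.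
Qed.

Lemma desc (s : nat -> N) b n0 : (forall n, TA (s n) (s (S n))) ->
  (forall n, n0 <= n -> side TA (s n) (s (S n)) (s (S n)) b) -> False.
Proof.
  intros Hs Hb. destruct (conn_walkn _ _ _ (tconn (s n0) b)) as [m Hm].
  assert (forall m n, n0 <= n -> walkn TA m (s n) b -> False) as K; [|eapply K; eauto].
  clear m Hm. intro m. induction m as [m IH] using lt_wf_ind. intros n Hn Hw.
  destruct (cross_walk (s n) (s (S n)) m (s n) b (Hs n) Hw) as (m1 & m2 & _ & Hm2 & _ & Hw2).
  apply side_refl. apply Hb; auto. apply (IH m2 Hm2 (S n)); auto.
Qed.

Section Half.
Variable s : nat -> N.
Hypothesis Hs : forall n, TA (s n) (s (S n)).
Hypothesis Hnb : forall n, s (S (S n)) <> s n.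
Definition Hs_ n x := side TA (s n) (s (S n)) (s (S n)) x.

Lemma Hs_next n : Hs_ n (s (S (S n))).
Proof.
  apply side_step; auto. intro Hi. apply inF_single in Hi as [[E1 E2]|[E1 E2]].
  pose proof (Hs n) as HH; rewrite E1 in HH; exact (TA_irr _ HH). apply (Hnb n); auto.
Qed.

Lemma Hs_notself n : ~ Hs_ n (s n).
Proof. intro H. apply (side_excl (s n) (s (S n)) (s n) (Hs n)). apply side_refl. auto. Qed.

Lemma Hs_nest n x : Hs_ (S n) x -> Hs_ n x.
Proof.
  intro H. destruct (side_dich (s (S n)) (s n) x (TA_sym _ _ (Hs n))) as [Hx|Hx].
  - apply side_swap in Hx. auto.
  - exfalso. apply side_swap in Hx.
    destruct (cross_conn (del TA [(s (S n), s (S (S n)))]) (s (S n)) (s n) (s (S (S n))) x) as [H1 _]; auto.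
    apply del_sub. apply TA_sym; auto. apply side_swap, Hs_next. apply side_swap; auto.
    apply (bridge (s (S n)) (s (S (S n))) (Hs (S n))). apply side_symm; auto.
Qed.

Lemma Hs_nest_le n m x : n <= m -> Hs_ m x -> Hs_ n x.
Proof. induction 1; auto. intro; apply IHle, Hs_nest; auto. Qed.

Lemma Hs_ray n m : n < m -> Hs_ n (s m).
Proof.
  intro H. induction H. apply side_refl. destruct m. lia.
  apply Hs_nest_le with m. lia. apply Hs_next.
Qed.

Lemma Hs_inj i j : s i = s j -> i = j.
Proof.
  intro E. destruct (lt_eq_lt_dec i j) as [[H|H]|H]; auto; exfalso.
  apply (Hs_notself i). rewrite E. apply Hs_ray; auto.
  apply (Hs_notself j). rewrite <- E. apply Hs_ray; auto.
Qed.

Lemma Hs_out q : exists n, forall m, n <= m -> ~ Hs_ m q.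
Proof.
  destruct (classic (exists n, ~ Hs_ n q)) as [[n Hn]|Hn].
  exists n; intros m Hm H; apply Hn; eapply Hs_nest_le; eauto.
  exfalso; apply (desc s q 0 Hs); intros n _. apply NNPP; intro; apply Hn; eauto.
Qed.

Lemma Hs_out_list (Q : list N) : exists n, forall m q, n <= m -> In q Q -> ~ Hs_ m q.
Proof.
  induction Q as [|q Q IH]. exists 0; intros m q _ [].
  destruct IH as [n1 H1]. destruct (Hs_out q) as [n2 H2]. exists (n1 + n2).
  intros m q' Hm [<-|Hin]. apply H2; lia. apply H1; auto; lia.
Qed.
End Half.

Lemma ray_nb (s : nat -> N) : is_ray TA s -> forall n, s (S (S n)) <> s n.
Proof. intros [Hi _] n E; apply Hi in E; lia. Qed.

Definition induced (D : N -> Prop) p q := TA p q /\ D p /\ D q.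

Lemma Dside D a b x : (forall p q, D p -> D q -> conn (induced D) p q) -> D a -> ~ D b -> D x -> side TA a b a x.
Proof.
  intros Hc Ha Hb Hx. apply conn_mono with (induced D). 2: apply Hc; auto.
  intros p q [H1 [H2 H3]]. split; auto. intro Hi; apply inF_single in Hi as [[-> ->]|[-> ->]]; auto.
Qed.

Lemma Dsep D x y : (forall p q, D p -> D q -> conn (induced D) p q) -> D x -> ~ D y ->
  exists a b, TA a b /\ D a /\ ~ D b /\ side TA a b a x /\ side TA a b b y.
Proof.
  intros Hc Hx Hy. pose proof (clos_rt_rtn1 _ _ _ _ (tconn x y)) as H. induction H. tauto.
  destruct (classic (D y)) as [Dy|Dy].
  - exists y, z. repeat split; auto. apply Dside with D; auto. apply side_refl.
  - destruct IHclos_refl_trans_n1 as (a & b & Hab & Ha & Hb & Hxa & Hyb); auto.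
    exists a, b; repeat split; auto. eapply side_trans; eauto. apply side_step; auto.
    intro Hi; apply inF_single in Hi as [[-> ->]|[-> ->]]; auto.
Qed.

Lemma region_conn D : region TA D -> forall p q, D p -> D q -> conn (induced D) p q.
Proof. intros [_ [H _]]; exact H. Qed.

Lemma comp_region c F : region TA (conn (del TA F) c).
Proof.
  split; [exists c; apply conn_refl|split].
  - intros x y Hx Hy. assert (Hsym : forall p q, induced (conn (del TA F) c) p q -> induced (conn (del TA F) c) q p).
    { intros p q [H1 [H2 H3]]; repeat split; auto. apply TA_sym; auto. }
    assert (forall z, conn (del TA F) c z -> conn (induced (conn (del TA F) c)) c z).
    { intros z Hz. eapply conn_mono; [|apply comp_induced; eauto]. intros p q [H1 [H2 H3]]. split; auto. apply del_sub in H1; auto. }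
    eapply conn_trans; [apply conn_sym; auto|]; auto.
  - exists F. intros u v Huv Hu Hv. apply NNPP; intro Hn. apply Hv. eapply conn_trans; eauto. apply conn_step; split; auto.
Qed.

End Tree.

Lemma comp_region_gen {X : Type} (A : X -> X -> Prop) (Hsym : forall u v, A u v -> A v u) c F :
  region A (conn (del A F) c).
Proof.
  split; [exists c; apply conn_refl|split].
  - intros x y Hx Hy.
    set (I := fun p q => A p q /\ conn (del A F) c p /\ conn (del A F) c q).
    assert (Hs : forall p q, I p q -> I q p).
    { intros p q [H1 [H2 H3]]; repeat split; auto. }
    assert (forall z, conn (del A F) c z -> conn I c z).
    { intros z Hz. eapply conn_mono; [|apply comp_induced; eauto]. intros p q [H1 [H2 H3]]. split; auto. apply del_sub in H1; auto. }
    eapply conn_trans; [apply conn_sym; auto|]; auto.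
  - exists F. intros u v Huv Hu Hv. apply NNPP; intro Hn. apply Hv. eapply conn_trans; eauto. apply conn_step; split; auto.
Qed.

Definition ends {X : Type} (F : list (X*X)) : list X := flat_map (fun p => [fst p; snd p]) F.
Lemma ends_in {X : Type} (F : list (X*X)) w w' : inF F w w' -> In w (ends F).
Proof. unfold ends; intros [H|H]; apply in_flat_map; eexists; split; eauto; simpl; auto. Qed.

Section Main.
Context {V N : Type} (GA : V -> V -> Prop) (TA : N -> N -> Prop) (part : V -> N).
Hypothesis HG : is_graph GA.
Hypothesis HTD : tree_cut_decomposition TA part.
Hypothesis Hadh : finite_adhesion GA TA part.
Hypothesis Hblk : forall u v, part u = part v <-> insep GA u v.
Hypothesis Hreal : forall t1 t2, TA t1 t2 -> exists u v, part u = t1 /\ part v = t2 /\ GA u v.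

Let HT : is_tree TA := proj1 HTD.
Lemma surj t : exists v, part v = t. Proof. apply (proj2 HTD). Qed.
Lemma GA_sym u v : GA u v -> GA v u. Proof. apply (proj1 HG). Qed.
Lemma same_part u v F : part u = part v -> conn (del GA F) u v.
Proof. intro E; apply Hblk in E; apply E. Qed.

Definition adh a b (F : list (V*V)) := forall u v, GA u v -> side TA a b a (part u) -> side TA a b b (part v) -> inF F u v.

Lemma adh_swap a b F : adh a b F -> adh b a F.
Proof. intros H u v Huv Hu Hv. apply inF_sym. apply H. apply GA_sym; auto. apply side_swap; auto. apply side_swap; auto. Qed.
Lemma adh_mono a b F F' : adh a b F -> (forall u v, inF F u v -> inF F' u v) -> adh a b F'.
Proof. intros H Hi u v ? ? ?; apply Hi; apply H; auto. Qed.
Lemma adh_ex a b : TA a b -> exists F, adh a b F.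
Proof. intro H. destruct (Hadh a b H) as [L HL]. exists L. intros u v ? ? ?; apply HL; auto. Qed.

Lemma adh_list (L : list (N*N)) : exists F, forall a b, TA a b -> inF L a b -> adh a b F.
Proof.
  induction L as [|[x y] L IH]. exists []; intros a b _ [[]|[]].
  destruct IH as [F' HF']. destruct (classic (TA x y)) as [Hxy|Hxy].
  - destruct (adh_ex x y Hxy) as [Fx HFx]. exists (F' ++ Fx). intros a b Hab Hin.
    apply inF_cons in Hin as [[-> ->]|[[-> ->]|Hin]].
    eapply adh_mono; eauto; apply inF_app_r. apply adh_swap; eapply adh_mono; eauto; apply inF_app_r.
    eapply adh_mono; eauto; apply inF_app_l.
  - exists F'. intros a b Hab Hin. apply inF_cons in Hin as [[-> ->]|[[-> ->]|Hin]].
    tauto. exfalso; apply Hxy, TA_sym; auto. auto.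
Qed.

Lemma Gstep a b F x y : TA a b -> adh a b F -> del GA F x y -> side TA a b (part x) (part y).
Proof.
  intros Hab Ha [Hxy Hn]. destruct (side_dich TA HT a b (part x) Hab) as [H1|H1];
  destruct (side_dich TA HT a b (part y) Hab) as [H2|H2].
  - eapply side_trans; [apply side_symm|]; eauto.
  - exfalso; apply Hn; apply Ha; auto.
  - exfalso; apply Hn; apply inF_sym, Ha; auto. apply GA_sym; auto.
  - eapply side_trans; [apply side_symm|]; eauto.
Qed.

Lemma Gconn a b F x y : TA a b -> adh a b F -> conn (del GA F) x y -> side TA a b (part x) (part y).
Proof. intros Hab Ha H. induction H. eapply Gstep; eauto. apply side_refl. eapply side_trans; eauto. Qed.

Lemma ray_sideG r a b : is_ray GA r -> TA a b ->
  tail_in r (fun v => side TA a b a (part v)) \/ tail_in r (fun v => side TA a b b (part v)).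
Proof.
  intros Hr Hab. destruct (adh_ex a b Hab) as [F HF]. destruct (ray_tail_conn GA r GA_sym Hr F) as [M HM].
  destruct (side_dich TA HT a b (part (r M)) Hab) as [H|H]; [left|right]; exists M; intros i Hi;
  eapply side_trans; eauto; eapply Gconn; eauto.
Qed.

Lemma ray_sideT s a b : is_ray TA s -> TA a b -> tail_in s (side TA a b a) \/ tail_in s (side TA a b b).
Proof.
  intros Hr Hab. destruct (ray_tail_conn TA s (TA_sym TA HT) Hr [(a,b)]) as [M HM].
  destruct (side_dich TA HT a b (s M) Hab) as [H|H]; [left|right]; exists M; intros i Hi;
  eapply side_trans; eauto; apply HM; lia.
Qed.

Lemma transfer r r' a b c : edge_equiv GA r r' -> TA a b ->
  tail_in r (fun v => side TA a b c (part v)) -> tail_in r' (fun v => side TA a b c (part v)).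
Proof.
  intros He Hab [n0 Hn0]. destruct (adh_ex a b Hab) as [F HF]. destruct (He F) as (n & m & Hnm).
  exists m; intros j Hj. eapply side_trans. apply (Hn0 (n + n0)); lia. eapply Gconn; eauto. apply Hnm; lia.
Qed.

Lemma tail_common (r : nat -> V) (P Q : V -> Prop) : tail_in r P -> tail_in r Q -> exists v, P v /\ Q v.
Proof. intros H1 H2. destruct (tail_and r P Q H1 H2) as [n Hn]. exists (r n); apply Hn; lia. Qed.

Lemma tail_common_side r a b c d : tail_in r (fun v => side TA a b c (part v)) -> tail_in r (fun v => side TA a b d (part v)) -> side TA a b c d.
Proof. intros H1 H2. destruct (tail_common r _ _ H1 H2) as [v [Hc Hd]]. eapply side_trans; eauto. apply side_symm; auto. Qed.

Lemma dom_node r u : edge_dominates GA u r -> phi GA TA part r (TNode (part u)).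
Proof.
  intros Hd a b Hab. destruct (adh_ex a b Hab) as [F HF]. destruct (Hd F) as [n Hn]. exists n; intros i Hi.
  eapply Gconn; eauto.
Qed.

Lemma dom_part r u v : edge_dominates GA u r -> edge_dominates GA v r -> part u = part v.
Proof.
  intros Hu Hv. apply NNPP; intro Hne. destruct (sep_edge TA HT _ _ Hne) as (a & b & Hab & Ha & Hb).
  destruct (adh_ex a b Hab) as [F HF]. destruct (Hu F) as [n1 H1]. destruct (Hv F) as [n2 H2].
  assert (side TA a b (part u) (part v)).
  { eapply Gconn; eauto. eapply conn_trans. apply (H1 (n1 + n2)); lia. apply conn_sym. apply del_sym, GA_sym. apply H2; lia. }
  apply (side_excl TA HT a b (part v) Hab); auto. eapply side_trans; eauto.
Qed.

Lemma dom_insep r u v : edge_dominates GA u r -> part v = part u -> edge_dominates GA v r.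
Proof. intros Hu E F. destruct (Hu F) as [n Hn]. exists n; intros i Hi. eapply conn_trans; [apply same_part; eauto|auto]. Qed.

Lemma RegConn (D : N -> Prop) t0 F : (forall p q, D p -> D q -> conn (induced TA D) p q) ->
  (forall w w', D (part w) -> part w <> t0 -> ~ inF F w w') ->
  forall x y, D (part x) -> D (part y) -> conn (del GA F) x y.
Proof.
  intros Hc Hno x y Hx Hy.
  assert (forall p q, conn (induced TA D) p q -> forall x y, part x = p -> part y = q -> conn (del GA F) x y) as K.
  { intros p q H. induction H as [p q H|p|p q z H1 IH1 H2 IH2]; intros x' y' Ex Ey.
    - destruct H as [Hxy [Dx Dy]]. destruct (Hreal _ _ Hxy) as (u & v & Eu & Ev & Huv).
      apply conn_trans with u; [apply same_part; congruence|]. apply conn_trans with v; [|apply same_part; congruence].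
      apply conn_step; split; auto. intro Hi.
      assert (p <> q) as Hpq by (intro E; rewrite E in Hxy; exact (TA_irr TA HT _ Hxy)).
      destruct (classic (p = t0)) as [E0|E0].
      + apply (Hno v u). rewrite Ev; auto. rewrite Ev; congruence. apply inF_sym; auto.
      + apply (Hno u v). rewrite Eu; auto. rewrite Eu; auto. auto.
    - apply same_part; congruence.
    - destruct (surj q) as [w Hw]. apply conn_trans with w; [apply IH1|apply IH2]; auto. }
  exact (K _ _ (Hc _ _ Hx Hy) x y eq_refl eq_refl).
Qed.

Lemma sep_list (Q : list N) t : exists Fe, (forall a b, In (a,b) Fe -> TA a b /\ side TA a b a t) /\
  (forall q, In q Q -> q <> t -> exists a b, In (a,b) Fe /\ side TA a b b q).
Proof.
  induction Q as [|q Q IH]. exists []; split; [intros ? ? []|intros ? []].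
  destruct IH as [Fe [H1 H2]]. destruct (classic (q = t)) as [E|E].
  - exists Fe; split; auto. intros q' [<-|Hin] Hne; [tauto|auto].
  - destruct (sep_edge TA HT _ _ (not_eq_sym E)) as (a & b & Hab & Ha & Hb). exists ((a,b)::Fe). split.
    + intros a' b' [Eq|Hin]. inversion Eq; subst; auto. auto.
    + intros q' [<-|Hin] Hne. exists a, b; simpl; auto. destruct (H2 q' Hin Hne) as (a' & b' & ? & ?); exists a', b'; simpl; auto.
Qed.

Lemma Fe_out (Q : list N) t Fe : (forall a b, In (a,b) Fe -> TA a b /\ side TA a b a t) ->
  (forall q, In q Q -> q <> t -> exists a b, In (a,b) Fe /\ side TA a b b q) ->
  forall q, In q Q -> q <> t -> ~ conn (del TA Fe) t q.
Proof.
  intros H1 H2 q Hq Hne Hc. destruct (H2 q Hq Hne) as (a & b & Hin & Hb). destruct (H1 a b Hin) as [Hab Ha].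
  apply (side_excl TA HT a b q Hab); auto. apply side_trans with t; auto.
  apply (conn_del_incl TA [(a,b)] Fe); auto. intros u v Hi; apply inF_single in Hi as [[-> ->]|[-> ->]]. apply inF_in; auto. apply inF_sym, inF_in; auto.
Qed.

Lemma Fe_tail r t Fe : (forall a b, In (a,b) Fe -> TA a b /\ side TA a b a t) ->
  phi GA TA part r (TNode t) -> tail_in r (fun v => conn (del TA Fe) t (part v)).
Proof.
  intros H1 Hphi.
  destruct (thresh (fun a b => In (a,b) Fe) (fun a b i => side TA a b t (part (r i))) Fe) as [M HM].
  { intros a b Hin. destruct (H1 a b Hin) as [Hab _]. destruct (Hphi a b Hab) as [n Hn]. exists n; auto. }
  exists M; intros i Hi. apply NNPP; intro Hn. destruct (sepF TA HT Fe t (part (r i)) Hn) as (a & b & Hab & Hin & Ha & Hb).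
  destruct Hin as [Hin|Hin].
  - apply (side_excl TA HT a b (part (r i)) Hab); auto. eapply side_trans; eauto. apply (HM a b Hin); auto. apply inF_in; auto.
  - destruct (H1 b a Hin) as [_ Hbt]. apply (side_excl TA HT a b t Hab); auto. apply side_swap; auto.
Qed.

Lemma node_dom r t u : phi GA TA part r (TNode t) -> part u = t -> edge_dominates GA u r.
Proof.
  intros Hphi Eu F. destruct (sep_list (map part (ends F)) t) as [Fe [H1 H2]].
  destruct (Fe_tail r t Fe H1 Hphi) as [M HM]. exists M; intros i Hi.
  apply (RegConn (conn (del TA Fe) t) t F).
  - apply region_conn; auto. apply comp_region; auto.
  - intros w w' Hw Hne Hin. apply (Fe_out _ t Fe H1 H2 (part w)); auto. apply in_map, (ends_in F w w'); auto.
  - rewrite Eu; apply conn_refl.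
  - apply HM; auto.
Qed.

Lemma wd_nn r r' t t' : phi GA TA part r (TNode t) -> phi GA TA part r' (TNode t') -> edge_equiv GA r r' -> t = t'.
Proof.
  intros H1 H2 He. apply NNPP; intro Hne. destruct (sep_edge TA HT _ _ Hne) as (a & b & Hab & Ha & Hb).
  pose proof (transfer r r' a b t He Hab (H1 a b Hab)) as T1.
  pose proof (tail_common_side r' a b t t' T1 (H2 a b Hab)).
  apply (side_excl TA HT a b t' Hab); auto. eapply side_trans; eauto.
Qed.

Lemma wd_ne r r' t s : phi GA TA part r (TNode t) -> phi GA TA part r' (TEnd s) -> edge_equiv GA r r' -> False.
Proof.
  intros H1 [Hs H2] He. pose proof (proj2 Hs) as Hst. pose proof (ray_nb TA s Hs) as Hnb.
  apply (desc TA HT s t 0 Hst). intros n _.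
  assert (tail_in s (side TA (s n) (s (S n)) (s (S n)))) as Ts.
  { exists (S n); intros i Hi. apply (Hs_ray TA HT s Hst Hnb n i); lia. }
  pose proof (H2 _ _ (Hst n) _ Ts) as T1.
  pose proof (transfer r' r _ _ _ (edge_equiv_sym GA r r' GA_sym He) (Hst n) T1) as T2.
  pose proof (tail_common_side r _ _ _ _ T2 (H1 _ _ (Hst n))). auto.
Qed.

Lemma end_back r s a b c : phi GA TA part r (TEnd s) -> TA a b ->
  tail_in r (fun v => side TA a b c (part v)) -> tail_in s (side TA a b c).
Proof.
  intros [Hs H2] Hab Hr. assert (forall x, tail_in s (side TA a b x) -> tail_in s (side TA a b c)) as K.
  { intros x Hx. pose proof (tail_common_side r a b c x Hr (H2 a b Hab x Hx)).
    eapply tail_mono; [|exact Hx]. intros v Hv. eapply side_trans; eauto. }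
  destruct (ray_sideT s a b Hs Hab); eapply K; eauto.
Qed.

Lemma wd_ee r r' s s' : phi GA TA part r (TEnd s) -> phi GA TA part r' (TEnd s') -> edge_equiv GA r r' -> edge_equiv TA s s'.
Proof.
  intros H1 H2 He F.
  destruct (thresh (fun a b => TA a b) (fun a b n => forall i j, n <= i -> n <= j -> side TA a b (s i) (s' j)) F) as [M HM].
  { intros a b Hab. assert (forall x, tail_in s (side TA a b x) -> exists n, forall k, n <= k -> forall i j, k <= i -> k <= j -> side TA a b (s i) (s' j)) as K.
    { intros x Hx. pose proof (proj2 H1 a b Hab x Hx) as T1. pose proof (transfer r r' a b x He Hab T1) as T2.
      pose proof (end_back r' s' a b x H2 Hab T2) as T3. destruct Hx as [n1 Hn1]. destruct T3 as [n2 Hn2].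
      exists (n1 + n2). intros k Hk i j Hi Hj. eapply side_trans; [apply side_symm, Hn1|apply Hn2]; try exact HT; lia. }
    destruct (ray_sideT s a b (proj1 H1) Hab); eapply K; eauto. }
  exists M, M. intros i j Hi Hj. apply NNPP; intro Hn. destruct (sepF TA HT F _ _ Hn) as (a & b & Hab & Hin & Ha & Hb).
  apply (side_excl TA HT a b (s' j) Hab); auto. apply side_trans with (s i); auto. apply (HM a b Hab Hin M); auto.
Qed.

Lemma inj_nn r r' t : phi GA TA part r (TNode t) -> phi GA TA part r' (TNode t) -> edge_equiv GA r r'.
Proof.
  intros H1 H2 F. destruct (surj t) as [u Hu]. destruct (node_dom r t u H1 Hu F) as [n1 Hn1].
  destruct (node_dom r' t u H2 Hu F) as [n2 Hn2]. exists n1, n2. intros i j Hi Hj.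
  eapply conn_trans; [apply conn_sym; [apply del_sym, GA_sym|apply Hn1; auto]|apply Hn2; auto].
Qed.

Lemma Hs_region s n : region TA (Hs_ TA s n).
Proof. apply comp_region; auto. Qed.

Lemma inj_ee r r' s s' : phi GA TA part r (TEnd s) -> phi GA TA part r' (TEnd s') -> edge_equiv TA s s' -> edge_equiv GA r r'.
Proof.
  intros H1 H2 He F. pose proof (proj1 H1) as Hs. pose proof (proj2 Hs) as Hst. pose proof (ray_nb TA s Hs) as Hnb.
  destruct (Hs_out_list TA HT s Hst Hnb (map part (ends F))) as [n Hn].
  assert (Ts : tail_in s (side TA (s n) (s (S n)) (s (S n)))).
  { exists (S n); intros i Hi. apply (Hs_ray TA HT s Hst Hnb n i); lia. }
  assert (Ts' : tail_in s' (side TA (s n) (s (S n)) (s (S n)))).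
  { destruct (He [(s n, s (S n))]) as (n1 & m1 & Hnm). exists m1. intros j Hj. eapply side_trans.
    apply (Hs_ray TA HT s Hst Hnb n (S n + n1)); lia. apply Hnm; lia. }
  destruct (proj2 H1 _ _ (Hst n) _ Ts) as [k1 Hk1]. destruct (proj2 H2 _ _ (Hst n) _ Ts') as [k2 Hk2].
  exists k1, k2. intros i j Hi Hj. apply (RegConn (Hs_ TA s n) (s n) F).
  - apply region_conn; auto. apply Hs_region.
  - intros w w' Hw _ Hin. apply (Hn n (part w)); auto. apply in_map, (ends_in F w w'); auto.
  - apply Hk1; auto.
  - apply Hk2; auto.
Qed.

End Main.

Lemma walk_last {X : Type} (R : X -> X -> Prop) n x a : walkn R (S n) x a -> exists c, walkn R n x c /\ R c a.
Proof.
  revert x. induction n; intros x H.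
  - inversion H; subst. inversion H2; subst. exists x; split; auto. constructor.
  - inversion H; subst. destruct (IHn y H2) as (c & H3 & H4). exists c; split; auto. econstructor; eauto.
Qed.

Section Main2.
Context {V N : Type} (GA : V -> V -> Prop) (TA : N -> N -> Prop) (part : V -> N).
Hypothesis HG : is_graph GA.
Hypothesis HTD : tree_cut_decomposition TA part.
Hypothesis Hadh : finite_adhesion GA TA part.
Hypothesis Hblk : forall u v, part u = part v <-> insep GA u v.
Hypothesis Hreal : forall t1 t2, TA t1 t2 -> exists u v, part u = t1 /\ part v = t2 /\ GA u v.

Let HT : is_tree TA := proj1 HTD.
Let GA_sym := GA_sym GA HG.

Lemma tailD D (g : nat -> N) : region TA D ->
  (forall a b, TA a b -> D a -> ~ D b -> exists n, forall i, n <= i -> side TA a b a (g i)) ->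
  exists M, forall i, M <= i -> D (g i).
Proof.
  intros HR H. pose proof (region_conn TA D HR) as Hc. destruct HR as [[d0 Hd0] [_ [LD HLD]]].
  destruct (thresh (fun a b => TA a b /\ D a /\ ~ D b) (fun a b i => side TA a b a (g i)) LD) as [M HM].
  { intros a b (? & ? & ?); auto. }
  exists M; intros i Hi. apply NNPP; intro Hn. destruct (Dsep TA HT D d0 (g i) Hc Hd0 Hn) as (a & b & Hab & Da & Db & Ha & Hb).
  exact (side_excl TA HT a b (g i) Hab (HM a b (conj Hab (conj Da Db)) (HLD a b Hab Da Db) i Hi) Hb).
Qed.

Lemma tail_norm D r p : region TA D -> phi GA TA part r p -> in_norm TA D p -> tail_in r (fun v => D (part v)).
Proof.
  intros HR Hphi Hn. pose proof (region_conn TA D HR) as Hc.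
  enough (H : forall a b, TA a b -> D a -> ~ D b -> exists n, forall i, n <= i -> side TA a b a (part (r i))).
  { destruct (tailD D (fun i => part (r i)) HR H) as [M HM]. exists M; auto. }
  intros a b Hab Da Db. destruct p as [t|s0]; simpl in Hn, Hphi.
  - destruct (Hphi a b Hab) as [n Hn2]. exists n; intros i Hi. apply side_trans with t; auto. apply (Dside TA D a b t); auto.
  - destruct Hn as (s1 & Hs1 & He & Hin). destruct (He [(a,b)]) as (n & m & Hnm).
    assert (tail_in s0 (side TA a b a)) as T0.
    { exists n; intros i Hi. apply side_trans with (s1 m). apply (Dside TA D a b); auto. apply side_symm; auto. apply Hnm; lia. }
    apply (proj2 Hphi a b Hab a T0).
Qed.

Lemma closure C LC x y : (forall u v, GA u v -> C u -> ~ C v -> inF LC u v) -> C x -> conn (del GA LC) x y -> C y.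
Proof.
  intros HL Hx H. induction H; auto. apply NNPP; intro Hn. destruct H as [H1 H2]. apply H2; auto.
Qed.

Lemma omega_from_tail (C : V -> Prop) D r' : (forall w, D (part w) -> C w) -> is_ray GA r' -> tail_in r' (fun v => D (part v)) -> in_OmegaE GA C r'.
Proof.
  intros HC Hr [M HM]. exists (fun n => r' (M + n)). split; [apply shift_ray; auto|split].
  apply shift_equiv; auto. intro n; apply HC, HM; lia.
Qed.

Lemma cont r p D : is_ray GA r -> phi GA TA part r p -> region TA D -> in_norm TA D p ->
  exists C, region GA C /\ in_OmegaE GA C r /\
    forall r' p', is_ray GA r' -> in_OmegaE GA C r' -> phi GA TA part r' p' -> in_norm TA D p'.
Proof.
  intros Hr Hphi HR Hn. pose proof (region_conn TA D HR) as Hc.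
  destruct (tail_norm D r p HR Hphi Hn) as [M1 HM1].
  pose proof HR as [[d0 Hd0] [_ [LD HLD]]].
  destruct (adh_list GA TA part HG HTD Hadh LD) as [F HF].
  assert (Hblock : forall u v, GA u v -> D (part u) -> ~ inF F u v -> D (part v)).
  { intros u v Huv Du Hi. apply NNPP; intro Dv. destruct (Dsep TA HT D _ _ Hc Du Dv) as (a & b & Hab & Da & Db & Ha & Hb).
    apply Hi. apply (HF a b Hab (HLD a b Hab Da Db)); auto. }
  destruct (ray_tail_conn GA r GA_sym Hr F) as [M2 HM2].
  set (N0 := M1 + M2). set (C := conn (del GA F) (r N0)).
  assert (HCD : forall x, C x -> D (part x)).
  { intros x Hx. assert (forall y x, conn (del GA F) y x -> D (part y) -> D (part x)) as K.
    { intros y0 x0 H. induction H; auto. intro; destruct H; eapply Hblock; eauto. }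
    apply (K (r N0)); auto. apply HM1; unfold N0; lia. }
  exists C. split; [apply comp_region_gen; auto|split].
  - exists (fun n => r (N0 + n)). split; [apply shift_ray; auto|split]. apply shift_equiv; auto.
    intro n; apply HM2; unfold N0; lia.
  - intros r' p' Hr' (s' & Hs' & He' & Hin') Hphi'.
    assert (Hs'D : forall n, D (part (s' n))) by (intro n; apply HCD; auto).
    assert (Kb : forall a b, TA a b -> D a -> ~ D b -> tail_in r' (fun v => side TA a b b (part v)) -> False).
    { intros a b Hab Da Db T. pose proof (transfer GA TA part HG HTD Hadh r' s' a b b He' Hab T) as [n Hn2].
      apply (side_excl TA HT a b (part (s' n)) Hab). apply (Dside TA D a b); auto. apply Hn2; auto. }
    destruct p' as [t'|s2]; simpl.
    + apply NNPP; intro Dt. destruct (Dsep TA HT D _ _ Hc (Hs'D 0) Dt) as (a & b & Hab & Da & Db & Ha & Hb).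
      apply (Kb a b Hab Da Db). eapply tail_mono; [|apply (Hphi' a b Hab)]. intros v Hv. apply side_trans with t'; auto.
    + assert (Hb2 : forall a b, TA a b -> D a -> ~ D b -> exists n, forall i, n <= i -> side TA a b a (s2 i)).
      { intros a b Hab Da Db. destruct (ray_sideT TA part HTD s2 a b (proj1 Hphi') Hab) as [T|T]; auto.
        exfalso. apply (Kb a b Hab Da Db). apply (proj2 Hphi' a b Hab b T). }
      destruct (tailD D s2 HR Hb2) as [M3 HM3].
      exists (fun n => s2 (M3 + n)). split; [apply shift_ray; apply (proj1 Hphi')|split].
      apply shift_equiv; [apply TA_sym; auto|apply (proj1 Hphi')]. intro n; apply HM3; lia.
Qed.

Lemma RegC (D : N -> Prop) (C : V -> Prop) LC t0 c : region TA D ->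
  (forall w w', D (part w) -> part w <> t0 -> ~ inF LC w w') ->
  (forall u v, GA u v -> C u -> ~ C v -> inF LC u v) -> C c -> D (part c) -> forall w, D (part w) -> C w.
Proof.
  intros HR Hno HL Cc Dc w Dw. apply (closure C LC c); auto.
  apply (RegConn GA TA part HTD Hblk Hreal D t0 LC); auto. apply region_conn; auto.
Qed.

Lemma openm r p C : is_ray GA r -> phi GA TA part r p -> region GA C -> in_OmegaE GA C r ->
  exists D, region TA D /\ in_norm TA D p /\
    forall r' p', is_ray GA r' -> phi GA TA part r' p' -> in_norm TA D p' -> in_OmegaE GA C r'.
Proof.
  intros Hr Hphi [_ [_ [LC HLC]]] (sC & HsC & HeC & HinC).
  set (Q := map part (ends LC)).
  assert (Fin : forall D, region TA D -> in_norm TA D p -> (forall w, D (part w) -> C w) ->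
    exists D, region TA D /\ in_norm TA D p /\
    forall r' p', is_ray GA r' -> phi GA TA part r' p' -> in_norm TA D p' -> in_OmegaE GA C r').
  { intros D HR Hn HC. exists D; split; [exact HR|split; [exact Hn|]]. intros r' p' Hr' Hp' Hn'.
    apply (omega_from_tail C D r'); auto. apply (tail_norm D r' p'); auto. }
  destruct p as [t|s].
  - destruct (sep_list TA part HTD (map part (ends LC)) t) as [Fe [H1 H2]].
    destruct (surj TA part HTD t) as [u Hu].
    assert (Cu : C u).
    { destruct (node_dom GA TA part HTD Hblk Hreal r t u Hphi Hu LC) as [n Hn].
      destruct (HeC LC) as (n1 & m1 & Hnm). apply (closure C LC (sC m1)); auto.
      apply conn_trans with (r (n + n1)); [apply conn_sym; [apply del_sym; auto|apply Hnm; lia]|].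
      apply conn_sym; [apply del_sym; auto|]. apply (Hn (n + n1)); lia. }
    apply (Fin (conn (del TA Fe) t)). apply comp_region; auto. apply conn_refl.
    apply (RegC _ C LC t u); auto. apply comp_region; auto.
    intros w w' Dw Hne Hi. apply (Fe_out TA part HTD Q t Fe H1 H2 (part w)); auto. apply in_map, (ends_in LC w w'); auto.
    rewrite Hu; apply conn_refl.
  - pose proof (proj1 Hphi) as Hs. pose proof (proj2 Hs) as Hst. pose proof (ray_nb TA s Hs) as Hnb.
    destruct (Hs_out_list TA HT s Hst Hnb Q) as [n Hn].
    assert (HR : region TA (Hs_ TA s n)) by (apply comp_region; auto).
    assert (Hnorm : in_norm TA (Hs_ TA s n) (TEnd s)).
    { exists (fun k => s (S n + k)). split; [apply shift_ray; auto|split]. apply shift_equiv; auto. apply TA_sym; auto.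
      intro k; apply (Hs_ray TA HT s Hst Hnb); lia. }
    apply (Fin _ HR Hnorm).
    pose proof (tail_norm _ r _ HR Hphi Hnorm) as Tr.
    pose proof (transfer GA TA part HG HTD Hadh r sC _ _ _ HeC (Hst n) Tr) as [k Hk].
    apply (RegC _ C LC (s n) (sC k)); auto.
    intros w w' Dw _ Hi. apply (Hn n (part w)); auto. apply in_map, (ends_in LC w w'); auto.
    apply Hk; auto.
Qed.

Lemma greedy_step r : is_ray GA r -> forall n x a b, walkn TA n x a -> TA a b -> side TA a b a x ->
  tail_in r (fun v => side TA a b b (part v)) -> exists y, TA x y /\ tail_in r (fun v => side TA x y y (part v)).
Proof.
  intros Hr n. induction n as [n IH] using lt_wf_ind. intros x a b Hw Hab Hx Ht. destruct n.
  - inversion Hw; subst. exists b; auto.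
  - destruct (walk_last TA n x a Hw) as (c & Hwc & Hca).
    destruct (ray_sideG GA TA part HG HTD Hadh r c a Hr Hca) as [Tc|Ta].
    + destruct (side_dich TA HT a b c Hab) as [Hac|Hbc].
      * exfalso. destruct (tail_common r _ _ Tc Ht) as [v [Hv1 Hv2]].
        destruct (cross_conn TA HT (del TA [(c,a)]) a b c (part v)) as [K _]; auto.
        intros; eapply del_sub; eauto. apply (bridge TA HT c a Hca); auto.
      * destruct (cross_walk TA HT a b n x c Hab Hwc Hx Hbc) as (m1 & m2 & Hm1 & _ & Hw1 & _).
        apply (IH m1 ltac:(lia) x a b); auto.
    + destruct (side_dich TA HT c a x Hca) as [Hcx|Hax].
      * apply (IH n ltac:(lia) x c a); auto.
      * destruct (cross_walk TA HT a c n x c (TA_sym TA HT _ _ Hca) Hwc) as (m1 & m2 & Hm1 & _ & Hw1 & _).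
        apply side_swap; auto. apply side_refl.
        apply (IH m1 ltac:(lia) x a b); auto.
Qed.

Lemma phi_exists r : is_ray GA r -> exists p, phi GA TA part r p.
Proof.
  intro Hr.
  destruct (classic (exists t, forall a b, TA a b -> tail_in r (fun v => side TA a b t (part v)))) as [[t Ht]|Hn].
  { exists (TNode t); exact Ht. }
  assert (Hnext : forall x, exists y, TA x y /\ tail_in r (fun v => side TA x y y (part v))).
  { intro x. pose proof (not_ex_all_not _ _ Hn x) as H. apply not_all_ex_not in H as [a H].
    apply not_all_ex_not in H as [b H]. apply imply_to_and in H as [Hab H].
    destruct (side_dich TA HT a b x Hab) as [Hx|Hx].
    - destruct (ray_sideG GA TA part HG HTD Hadh r a b Hr Hab) as [T|T].
      + exfalso; apply H. eapply tail_mono; [|exact T]. intros v Hv. apply side_trans with a; auto. apply side_symm; auto.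
      + destruct (conn_walkn _ _ _ (tconn TA HT x a)) as [m Hm]. eapply greedy_step; eauto.
    - destruct (ray_sideG GA TA part HG HTD Hadh r a b Hr Hab) as [T|T].
      + destruct (conn_walkn _ _ _ (tconn TA HT x b)) as [m Hm]. apply (greedy_step r Hr m x b a); auto.
        apply TA_sym; auto. apply side_swap; auto. eapply tail_mono; [|exact T]. intros; apply side_swap; auto.
      + exfalso; apply H. eapply tail_mono; [|exact T]. intros v Hv. apply side_trans with b; auto. apply side_symm; auto. }
  set (f := fun x => proj1_sig (constructive_indefinite_description _ (Hnext x))).
  assert (Hf : forall x, TA x (f x) /\ tail_in r (fun v => side TA x (f x) (f x) (part v))).
  { intro x. exact (proj2_sig (constructive_indefinite_description _ (Hnext x))). }
  set (s := fun n => Nat.iter n f (part (r 0))).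
  assert (Hss : forall n, s (S n) = f (s n)) by reflexivity.
  assert (Hst : forall n, TA (s n) (s (S n))) by (intro n; rewrite Hss; apply Hf).
  assert (Hpt : forall n, tail_in r (fun v => side TA (s n) (s (S n)) (s (S n)) (part v))) by (intro n; rewrite Hss; apply Hf).
  assert (Hnb : forall n, s (S (S n)) <> s n).
  { intros n E. pose proof (Hpt (S n)) as T1. rewrite E in T1.
    assert (tail_in r (fun v => side TA (s n) (s (S n)) (s n) (part v))) as T2.
    { eapply tail_mono; [|exact T1]. intros; apply side_swap; auto. }
    apply (bridge TA HT (s n) (s (S n)) (Hst n)). apply (tail_common_side TA part HTD r _ _ _ _ T2 (Hpt n)). }
  exists (TEnd s). split. split; auto. apply (Hs_inj TA HT s Hst Hnb).
  intros a b Hab u Hu. apply NNPP; intro Hnu.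
  assert (K : forall c, tail_in r (fun v => side TA a b c (part v)) -> False).
  { intros c Tc. destruct Hu as [n0 Hn0]. apply (desc TA HT s c n0 Hst). intros n Hnn.
    destruct (side_dich TA HT (s n) (s (S n)) c (Hst n)) as [Hc|Hc]; auto. exfalso.
    destruct (tail_common r _ _ Tc (Hpt n)) as [v [Hv1 Hv2]].
    destruct (cross_conn TA HT (del TA [(a,b)]) (s (S n)) (s n) (part v) c) as [K1 _].
    intros; eapply del_sub; eauto. apply TA_sym; auto. apply side_symm in Hv1; auto.
    apply side_swap; auto. apply side_swap; auto.
    assert (side TA a b u c).
    { apply side_trans with (s (S n)). apply Hn0; lia. apply (side_symm TA HT). apply side_trans with (part v); auto. }
    apply Hnu. eapply tail_mono; [|exact Tc]. intros w Hw. apply side_trans with c; auto. }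
  destruct (ray_sideG GA TA part HG HTD Hadh r a b Hr Hab) as [T|T]; eapply K; eauto.
Qed.

End Main2.

Lemma path_conn {X : Type} (R : X -> X -> Prop) (f : nat -> X) len :
  (forall i, i < len -> R (f i) (f (S i))) -> forall i j, i <= j -> j <= len -> conn R (f i) (f j).
Proof.
  intros H i j Hij Hj. induction Hij. apply conn_refl. eapply conn_trans; [apply IHHij; lia|]. apply conn_step, H; lia.
Qed.

Definition ltlex (p q : nat * nat) := fst p < fst q \/ (fst p = fst q /\ snd p < snd q).

Section Constr.
Context {V N : Type} (GA : V -> V -> Prop) (TA : N -> N -> Prop) (part : V -> N).
Hypothesis HG : is_graph GA.
Hypothesis HTD : tree_cut_decomposition TA part.
Hypothesis Hadh : finite_adhesion GA TA part.
Hypothesis Hblk : forall u v, part u = part v <-> insep GA u v.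
Hypothesis Hreal : forall t1 t2, TA t1 t2 -> exists u v, part u = t1 /\ part v = t2 /\ GA u v.

Let HT : is_tree TA := proj1 HTD.

Lemma end_preimage s : is_ray TA s -> exists r, is_ray GA r /\ ~ edge_dominated GA r /\ phi GA TA part r (TEnd s).
Proof.
  intro Hs. pose proof (proj2 Hs) as Hst. pose proof (ray_nb TA s Hs) as Hnb.
  assert (Hxy : forall k, exists p : V * V, part (fst p) = s k /\ part (snd p) = s (S k) /\ GA (fst p) (snd p)).
  { intro k. destruct (Hreal _ _ (Hst k)) as (u & v & ? & ? & ?). exists (u, v); auto. }
  set (xy := fun k => proj1_sig (constructive_indefinite_description _ (Hxy k))).
  assert (Hxy' : forall k, part (fst (xy k)) = s k /\ part (snd (xy k)) = s (S k) /\ GA (fst (xy k)) (snd (xy k))).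
  { intro k. exact (proj2_sig (constructive_indefinite_description _ (Hxy k))). }
  assert (HAd : forall k, exists F, adh GA TA part (s k) (s (S k)) F) by (intro k; apply (adh_ex GA TA part Hadh); auto).
  set (Ad := fun k => proj1_sig (constructive_indefinite_description _ (HAd k))).
  assert (HAd' : forall k, adh GA TA part (s k) (s (S k)) (Ad k)).
  { intro k. exact (proj2_sig (constructive_indefinite_description _ (HAd k))). }
  set (z := fun k => match k with 0 => fst (xy 0) | S j => snd (xy j) end).
  assert (Hz : forall k, part (z k) = s k). { intros [|j]; simpl; apply Hxy'. }
  assert (HP : forall k, exists lf : nat * (nat -> V), snd lf 0 = z k /\ snd lf (fst lf) = fst (xy k) /\
     (forall i, i < fst lf -> del GA (Ad (pred k) ++ Ad k) (snd lf i) (snd lf (S i))) /\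
     (forall i j, i <= fst lf -> j <= fst lf -> snd lf i = snd lf j -> i = j)).
  { intro k. destruct (conn_spath _ (z k) (fst (xy k)) (same_part GA part Hblk (z k) (fst (xy k)) (Ad (pred k) ++ Ad k) (eq_trans (Hz k) (eq_sym (proj1 (Hxy' k)))))) as (len & f & H1 & H2 & H3 & H4).
    exists (len, f); simpl; auto. }
  set (Len := fun k => fst (proj1_sig (constructive_indefinite_description _ (HP k)))).
  set (P := fun k => snd (proj1_sig (constructive_indefinite_description _ (HP k)))).
  assert (HP' : forall k, P k 0 = z k /\ P k (Len k) = fst (xy k) /\
     (forall i, i < Len k -> del GA (Ad (pred k) ++ Ad k) (P k i) (P k (S i))) /\
     (forall i j, i <= Len k -> j <= Len k -> P k i = P k j -> i = j)).
  { intro k. exact (proj2_sig (constructive_indefinite_description _ (HP k))). }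
  set (sl := fun k p => (k = 0 \/ Hs_ TA s (pred k) p) /\ ~ Hs_ TA s k p).
  assert (Hsl : forall k i, i <= Len k -> sl k (part (P k i))).
  { intros k i Hi. destruct (HP' k) as (H0 & HL & H3 & _). split.
    - destruct k as [|j]; [left; auto|right]. simpl. unfold Hs_.
      replace (s (S j)) with (part (P (S j) 0)) at 2 by (rewrite H0; apply Hz).
      apply (Gconn GA TA part HG HTD _ _ (Ad j ++ Ad (S j))); auto. eapply adh_mono; [apply HAd'|apply inF_app_l].
      apply (path_conn _ _ (Len (S j))); auto; lia.
    - intro Hc. assert (side TA (s k) (s (S k)) (part (P k i)) (s k)) as Hc2.
      { replace (s k) with (part (P k (Len k))) at 2 by (rewrite HL; apply Hxy'). apply (Gconn GA TA part HG HTD _ _ (Ad (pred k) ++ Ad k)); auto.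
        eapply adh_mono; [apply HAd'|apply inF_app_r]. apply (path_conn _ _ (Len k)); auto. }
      apply (bridge TA HT (s k) (s (S k)) (Hst k)). apply side_symm; auto. eapply side_trans; eauto. }
  assert (Hdisj : forall k l p, sl k p -> sl l p -> k = l).
  { assert (forall k l p, k < l -> sl k p -> sl l p -> False) as K.
    { intros k l p Hkl [_ H1] [[H2|H2] _]. lia. apply H1. apply (Hs_nest_le TA HT s Hst Hnb k (pred l)); auto; lia. }
    intros k l p H1 H2. destruct (lt_eq_lt_dec k l) as [[H|H]|H]; auto; exfalso; eapply K; eauto. }
  set (step := fun (ki : nat * nat) => if snd ki <? Len (fst ki) then (fst ki, S (snd ki)) else (S (fst ki), 0)).
  set (st := fun n => Nat.iter n step (0, 0)).
  assert (Hst1 : forall n, st (S n) = step (st n)) by reflexivity.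
  assert (Hinv : forall n, snd (st n) <= Len (fst (st n))).
  { induction n. simpl; lia. rewrite Hst1. unfold step. destruct (snd (st n) <? Len (fst (st n))) eqn:E; simpl.
    apply Nat.ltb_lt in E; lia. lia. }
  set (r := fun n => P (fst (st n)) (snd (st n))).
  assert (Hlex : forall n, ltlex (st n) (st (S n))).
  { intro n. rewrite Hst1. unfold step, ltlex. destruct (snd (st n) <? Len (fst (st n))); simpl; lia. }
  assert (Hlex2 : forall n m, n < m -> ltlex (st n) (st m)).
  { intros n m H. induction H. apply Hlex. pose proof (Hlex m). unfold ltlex in *; lia. }
  assert (Hadj : forall n, GA (r n) (r (S n))).
  { intro n. unfold r. rewrite Hst1. unfold step. destruct (snd (st n) <? Len (fst (st n))) eqn:E; simpl.
    - apply Nat.ltb_lt in E. apply (proj1 (proj2 (proj2 (HP' _))) _ E).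
    - apply Nat.ltb_ge in E. pose proof (Hinv n). assert (snd (st n) = Len (fst (st n))) as E2 by lia.
      rewrite E2, (proj1 (proj2 (HP' _))), (proj1 (HP' _)). simpl. apply Hxy'. }
  assert (Hrsl : forall n, sl (fst (st n)) (part (r n))) by (intro n; apply Hsl, Hinv).
  assert (Hinj : forall i j, r i = r j -> i = j).
  { intros i j E. assert (fst (st i) = fst (st j)) as Ek.
    { apply (Hdisj _ _ (part (r i))); auto. rewrite E; auto. }
    assert (snd (st i) = snd (st j)) as Ei.
    { unfold r in E. rewrite Ek in E. apply (proj2 (proj2 (proj2 (HP' _)))) in E; [exact E| |apply Hinv]. rewrite <- Ek; apply Hinv. }
    destruct (lt_eq_lt_dec i j) as [[H|H]|H]; auto; exfalso.
    pose proof (Hlex2 _ _ H); unfold ltlex in *; lia. pose proof (Hlex2 _ _ H); unfold ltlex in *; lia. }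
  assert (Hray : is_ray GA r) by (split; auto).
  assert (Hmono : forall n m, n <= m -> fst (st n) <= fst (st m)).
  { intros n m H. induction H. lia. pose proof (Hlex m); unfold ltlex in *; lia. }
  assert (Hunb : forall K, exists n, K <= fst (st n)).
  { assert (forall d n, Len (fst (st n)) - snd (st n) = d -> exists m, fst (st n) < fst (st m)) as K1.
    { induction d; intros n Hd.
      - exists (S n). rewrite Hst1. unfold step. destruct (snd (st n) <? Len (fst (st n))) eqn:E; simpl.
        apply Nat.ltb_lt in E; lia. lia.
      - destruct (IHd (S n)) as [m Hm]. rewrite Hst1. unfold step.
        destruct (snd (st n) <? Len (fst (st n))) eqn:E; simpl. apply Nat.ltb_lt in E; lia.
        apply Nat.ltb_ge in E; lia.
        exists m. rewrite Hst1 in Hm. unfold step in Hm.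
        destruct (snd (st n) <? Len (fst (st n))) eqn:E; simpl in Hm. auto. apply Nat.ltb_ge in E; lia. }
    induction K. exists 0; lia. destruct IHK as [n Hn]. destruct (K1 _ n eq_refl) as [m Hm]. exists m; lia. }
  assert (Hphi : phi GA TA part r (TEnd s)).
  { split; auto. intros a b Hab u [n0 Hu].
    destruct (Hs_out_list TA HT s Hst Hnb [a; b]) as [n1 Hn1].
    set (m := n0 + n1).
    assert (Ha : ~ Hs_ TA s m a) by (apply Hn1; simpl; auto; unfold m; lia).
    assert (Hb : ~ Hs_ TA s m b) by (apply Hn1; simpl; auto; unfold m; lia).
    assert (Hsm : side TA a b u (s (S m))) by (apply Hu; unfold m; lia).
    assert (HH : forall q, Hs_ TA s m q -> side TA a b u q).
    { intros q Hq. apply NNPP; intro Hnq.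
      assert (HR : forall x y, del TA [(s m, s (S m))] x y -> TA x y) by (intros; eapply del_sub; eauto).
      destruct (side_dich TA HT a b (s (S m)) Hab) as [H1|H1].
      - destruct (side_dich TA HT a b q Hab) as [H2|H2].
        + apply Hnq. apply side_trans with (s (S m)); auto. apply side_trans with a; auto. apply side_symm; auto.
        + destruct (cross_conn TA HT _ a b (s (S m)) q HR Hab Hq H1 H2) as [K1 _]. auto.
      - destruct (side_dich TA HT a b q Hab) as [H2|H2].
        + destruct (cross_conn TA HT _ b a (s (S m)) q HR (TA_sym TA HT _ _ Hab) Hq) as [K1 _].
          apply side_swap; auto. apply side_swap; auto. auto.
        + apply Hnq. apply side_trans with (s (S m)); auto. apply side_trans with b; auto. apply side_symm; auto. }
    destruct (Hunb (S m)) as [n2 Hn2]. exists n2. intros n Hn. apply HH.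
    destruct (Hrsl n) as [[E|H1] _]. pose proof (Hmono _ _ Hn). lia.
    apply (Hs_nest_le TA HT s Hst Hnb m (pred (fst (st n)))); auto. pose proof (Hmono _ _ Hn). lia. }
  exists r. split; auto. split; auto.
  intros [u Hu]. apply (wd_ne GA TA part HG HTD Hadh r r (part u) s); auto.
  apply (dom_node GA TA part HG HTD Hadh); auto. apply edge_equiv_refl; auto. apply GA_sym; auto.
Qed.

End Constr.

Theorem theorem3p1 (V N : Type) (GA : V -> V -> Prop) (TA : N -> N -> Prop)
  (part : V -> N) :
  is_graph GA -> connected_graph GA ->
  tree_cut_decomposition TA part ->
  finite_adhesion GA TA part ->
  (* the parts are exactly the omega-edge blocks *)
  (forall u v, part u = part v <-> insep GA u v) ->
  (* every edge of T is realized by an edge of G between the two parts *)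
  (forall t1 t2, TA t1 t2 -> exists u v, part u = t1 /\ part v = t2 /\ GA u v) ->
  topological_embedding GA TA (phi GA TA part) /\
  (* (1) *)
  ((forall r p, is_ray GA r -> ~ edge_dominated GA r -> phi GA TA part r p ->
      exists s, p = TEnd s) /\
   (forall s, is_ray TA s -> exists r, is_ray GA r /\ ~ edge_dominated GA r /\
      phi GA TA part r (TEnd s))) /\
  (* (2) *)
  (forall r, is_ray GA r -> edge_dominated GA r ->
     exists t, phi GA TA part r (TNode t) /\
       forall v, part v = t <-> edge_dominates GA v r).
Proof.
  intros HG _ HTD Hadh Hblk Hreal.
  split; [|split; [split|]].
  - split; [|split; [|split; [|split]]].
    + intros r Hr. apply (phi_exists GA TA part HG HTD Hadh r Hr).
    + intros r r' p p' Hr Hr' He H1 H2. destruct p as [t|s]; destruct p' as [t'|s']; simpl.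
      * apply (wd_nn GA TA part HG HTD Hadh r r'); auto.
      * apply (wd_ne GA TA part HG HTD Hadh r r' t s'); auto.
      * apply (wd_ne GA TA part HG HTD Hadh r' r t' s); auto. apply edge_equiv_sym; auto. apply (GA_sym GA HG).
      * apply (wd_ee GA TA part HG HTD Hadh r r'); auto.
    + intros r r' p p' Hr Hr' H1 H2 Hp. destruct p as [t|s]; destruct p' as [t'|s']; simpl in Hp; try tauto.
      * subst. apply (inj_nn GA TA part HG HTD Hblk Hreal r r' t'); auto.
      * apply (inj_ee GA TA part HTD Hblk Hreal r r' s s'); auto.
    + intros r p Hr Hp D HD Hn. apply (cont GA TA part HG HTD Hadh r p D); auto.
    + intros r p Hr Hp C HC Hn. apply (openm GA TA part HG HTD Hadh Hblk Hreal r p C); auto.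
  - intros r p Hr Hnd Hp. destruct p as [t|s]; [|eauto]. exfalso. apply Hnd.
    destruct (surj TA part HTD t) as [u Hu]. exists u. apply (node_dom GA TA part HTD Hblk Hreal r t u); auto.
  - intros s Hs. apply (end_preimage GA TA part HG HTD Hadh Hblk Hreal s Hs).
  - intros r Hr [u Hu]. exists (part u). split. apply (dom_node GA TA part HG HTD Hadh); auto.
    intro v; split; intro H.
    + apply (dom_insep GA part Hblk r u v); auto.
    + symmetry. apply (dom_part GA TA part HG HTD Hadh r u v); auto.
Qed.
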